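(* Let $G$ be a finite simple graph with adjacency matrix $A$. Then every realization of $G$ by Pauli strings uses strings of length at least $\operatorname{rank}_{\mathbb{F}_2}(A)/2$, and there exists a realization of $G$ by Pauli strings of length exactly $\operatorname{rank}_{\mathbb{F}_2}(A)/2$.
   Context: $\operatorname{rank}_{\mathbb{F}_2}(A)$ is the rank of the $0/1$ matrix $A$ over the field with two elements (it is even since $A$ is symmetric with zero diagonal). A Pauli string of length $\ell$ is a tensor product of $\ell$ matrices from $\{I,X,Y,Z\}$. A realization of $G$ on $\{1,\dots,n\}$ is a tuple $(S_1,\dots,S_n)$ of Pauli strings of a common length with $S_iS_j=-S_jS_i$ if $i\sim j$ and $S_iS_j=S_jS_i$ otherwise. *)

(* Defs.v *)
From mathcomp Require Import all_boot all_order all_algebra all_field.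
From mathcomp Require Import mxtens.
Set Implicit Arguments. Unset Strict Implicit. Unset Printing Implicit Defensive.
Import GRing.Theory Num.Theory.
Local Open Scope ring_scope.

Inductive pauli := PI | PX | PY | PZ.

Definition pauli_mx (p : pauli) : 'M[algC]_2 :=
  \matrix_(i < 2, j < 2)
   match p with
   | PI => if i == j then 1 else 0
   | PX => if i == j then 0 else 1
   | PY => if i == j then 0 else if (i == 0 :> nat) then - 'i else 'i
   | PZ => if i == j then (if (i == 0 :> nat) then 1 else -1) else 0
   end.

Fixpoint pdim (s : seq pauli) : nat :=
  if s is _ :: s' then (2 * pdim s')%N else 1%N.

Fixpoint pstr_mx (s : seq pauli) : 'M[algC]_(pdim s) :=
  match s return 'M[algC]_(pdim s) with
  | [::] => 1%:M
  | p :: s' => tensmx (pauli_mx p) (pstr_mx s')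
  end.

Lemma pdim_size (s : seq pauli) : pdim s = (2 ^ size s)%N.
Proof. by elim: s => //= _ s ->; rewrite expnS. Qed.

Lemma pdim_tuple l (t : l.-tuple pauli) : pdim t = (2 ^ l)%N.
Proof. by rewrite pdim_size size_tuple. Qed.

Definition pauli_string_mx l (t : l.-tuple pauli) : 'M[algC]_(2 ^ l) :=
  castmx (pdim_tuple t, pdim_tuple t) (pstr_mx t).

Definition realization n (adj : rel 'I_n) l (S : 'I_n -> l.-tuple pauli) :=
  forall i j : 'I_n,
    if adj i j then
      pauli_string_mx (S i) *m pauli_string_mx (S j)
      = - (pauli_string_mx (S j) *m pauli_string_mx (S i))
    else
      pauli_string_mx (S i) *m pauli_string_mx (S j)
      = pauli_string_mx (S j) *m pauli_string_mx (S i).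

Definition adj_mx_F2 n (adj : rel 'I_n) : 'M['F_2]_n :=
  \matrix_(i, j) (adj i j)%:R.

(* Main.v *)
Require Import Defs.
From mathcomp Require Import all_boot all_order all_algebra all_field.
From mathcomp Require Import mxtens zify.
Set Implicit Arguments. Unset Strict Implicit. Unset Printing Implicit Defensive.
Import GRing.Theory Num.Theory.
Local Open Scope ring_scope.

Lemma castmxM m m' (e : m = m') (M N : 'M[algC]_m) :
  castmx (e,e) (M *m N) = castmx (e,e) M *m castmx (e,e) N.
Proof. by case: m' / e. Qed.
Lemma castmxZ m m' (e : m = m') c (M : 'M[algC]_m) :
  castmx (e,e) (c *: M) = c *: castmx (e,e) M.
Proof. by case: m' / e. Qed.
Lemma castmx1 m m' (e : m = m') : castmx (e,e) (1%:M : 'M[algC]_m) = 1%:M.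
Proof. by case: m' / e. Qed.

Lemma tensmxZ m n p q a b (A : 'M[algC]_(m,n)) (B : 'M[algC]_(p,q)) :
  (a *: A) *t (b *: B) = (a * b) *: (A *t B).
Proof. by apply/matrixP=> i j; rewrite !mxE mulrACA. Qed.

Lemma tensmx11 m p : (1%:M : 'M[algC]_m) *t (1%:M : 'M[algC]_p) = 1%:M.
Proof.
apply/matrixP=> i j.
case: (mxtens_indexP i)=> i0 i1; case: (mxtens_indexP j)=> j0 j1.
rewrite tensmxE !mxE (inj_eq (can_inj (@mxtens_indexK _ _))) xpair_eqE.
by case: (i0 == j0); case: (i1 == j1); rewrite ?mulr1 ?mulr0.
Qed.

Lemma psm_cons_aux l (A : 'M[algC]_2) k (M : 'M[algC]_k) (e1 : (2 * k)%N = (2 ^ l.+1)%N)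
  (e2 : k = (2 ^ l)%N) (e : (2 * 2 ^ l)%N = (2 ^ l.+1)%N) :
  castmx (e1, e1) (A *t M) = castmx (e, e) (A *t castmx (e2, e2) M).
Proof. subst k; by rewrite castmx_id (eq_irrelevance e1 e). Qed.

Lemma e2l l : (2 * 2 ^ l)%N = (2 ^ l.+1)%N. Proof. by rewrite expnS. Qed.

Lemma psm_cons l p (t : l.-tuple pauli) :
  pauli_string_mx (cons_tuple p t) =
  castmx (e2l l, e2l l) (pauli_mx p *t pauli_string_mx t).
Proof. rewrite /pauli_string_mx; exact: psm_cons_aux. Qed.
Definition acl (p q : pauli) : bool :=
  match p, q with
  | PI, _ => false | _, PI => false
  | PX, PX => false | PY, PY => false | PZ, PZ => false
  | _, _ => true end.
Lemma ord2_cases (i : 'I_2) : i = 0 \/ i = 1.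
Proof. by case: i => [[|[|k]] Hk]; [left|right|]; try apply/val_inj. Qed.

Lemma ii : 'i * 'i = -1 :> algC. Proof. by rewrite -expr2 sqrCi. Qed.

Lemma pauli_sq p : pauli_mx p *m pauli_mx p = 1.
Proof.
apply/matrixP=> i j; rewrite !mxE !big_ord_recl !big_ord0 !mxE.
case: (ord2_cases i) => ->; case: (ord2_cases j) => ->; case: p => /=;
  rewrite ?(mul0r,mulr0,mul1r,mulr1,addr0,add0r,mulrNN,mulNr,mulrN,opprK,ii,oppr0) //=.
Qed.

Lemma pauli_comm p q : pauli_mx p *m pauli_mx q = (-1) ^+ acl p q *: (pauli_mx q *m pauli_mx p).
Proof.
apply/matrixP=> i j; rewrite !mxE !big_ord_recl !big_ord0 !mxE.
case: (ord2_cases i) => ->; case: (ord2_cases j) => ->; case: p; case: q => /=;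
  rewrite ?expr0 ?expr1 ?scale1r ?scaleN1r ?mxE; rewrite ?(mul0r,mulr0,mul1r,mulr1,addr0,add0r,mulrNN,mulNr,mulrN,opprK,ii,oppr0) //=.
Qed.

Fixpoint om (s t : seq pauli) : nat :=
  match s, t with p :: s', q :: t' => (acl p q + om s' t')%N | _, _ => 0%N end.

Lemma psm_comm l (s t : l.-tuple pauli) :
  pauli_string_mx s *m pauli_string_mx t
  = (-1) ^+ om s t *: (pauli_string_mx t *m pauli_string_mx s).
Proof.
elim: l s t => [|l IH] s t.
  by rewrite (tuple0 s) (tuple0 t) /= expr0 scale1r.
case/tupleP: s => p s; case/tupleP: t => q t.
rewrite !psm_cons -!castmxM !tensmx_mul pauli_comm IH tensmxZ -castmxZ.
by rewrite /= exprD.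
Qed.

Lemma psm_sq l (s : l.-tuple pauli) :
  pauli_string_mx s *m pauli_string_mx s = 1%:M.
Proof.
elim: l s => [|l IH] s.
  by rewrite (tuple0 s) /pauli_string_mx /= castmx1 mulmx1.
case/tupleP: s => p s.
by rewrite !psm_cons -!castmxM !tensmx_mul pauli_sq IH tensmx11 castmx1.
Qed.

Lemma neg_self l (Q R : 'M[algC]_(2^l)) : Q *m R = 1%:M -> Q <> -Q.
Proof.
move=> QR QN.
have := congr1 (fun M => M *m R) QN; rewrite /= mulNmx QR => H.
have h : (0 < 2 ^ l)%N by rewrite expn_gt0.
have := congr1 (fun M : 'M[algC]_(2^l) => M (Ordinal h) (Ordinal h)) H.
rewrite /= !mxE eqxx /= => /eqP.
by rewrite -subr_eq0 opprK -mulr2n pnatr_eq0.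
Qed.

Lemma psm_rel l (s t : l.-tuple pauli) (b : bool) :
  (if b then pauli_string_mx s *m pauli_string_mx t
            = - (pauli_string_mx t *m pauli_string_mx s)
   else pauli_string_mx s *m pauli_string_mx t
            = pauli_string_mx t *m pauli_string_mx s)
  <-> odd (om s t) = b.
Proof.
have QR : (pauli_string_mx t *m pauli_string_mx s) *m
          (pauli_string_mx s *m pauli_string_mx t) = 1%:M.
  by rewrite mulmxA -(mulmxA (pauli_string_mx t)) psm_sq mulmx1 psm_sq.
rewrite psm_comm -signr_odd; split.
  case: b; case: (odd (om s t)) => //=; rewrite ?expr0 ?expr1 ?scale1r ?scaleN1r.
    by move=> H; case: (neg_self QR H).
  by move=> H; case: (neg_self QR (esym H)).
by move=> ->; case: b; rewrite ?expr0 ?expr1 ?scale1r ?scaleN1r.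
Qed.

Lemma split_lshift m n (i : 'I_m) : split (lshift n i) = inl i.
Proof. exact: (unsplitK (inl i)). Qed.
Lemma split_rshift m n (i : 'I_n) : split (rshift m i) = inr i.
Proof. exact: (unsplitK (inr i)). Qed.

Lemma F2_cases (x : 'F_2) : x = 0 \/ x = 1.
Proof. by case: x => [[|[|k]] Hk]; [left|right|]; try apply/val_inj. Qed.

Lemma F2nat m : (m%:R : 'F_2) = (odd m)%:R.
Proof.
elim: m => [|m IH] //; rewrite mulrS IH /=.
by case: (odd m); apply/val_inj.
Qed.

Lemma F2b_inj (b c : bool) : (b%:R : 'F_2) = c%:R -> b = c.
Proof. by case: b; case: c => // /eqP; rewrite ?oner_eq0 // eq_sym oner_eq0. Qed.

Definition xb (p : pauli) : 'F_2 := match p with PX | PY => 1 | _ => 0 end.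
Definition zb (p : pauli) : 'F_2 := match p with PZ | PY => 1 | _ => 0 end.

Lemma acl_F2 p q : ((acl p q)%:R : 'F_2) = xb p * zb q + zb p * xb q.
Proof. by case: p; case: q; apply/val_inj. Qed.

Lemma om_sum l (s t : l.-tuple pauli) :
  om s t = (\sum_(j < l) acl (tnth s j) (tnth t j))%N.
Proof.
elim: l s t => [|l IH] s t; first by rewrite (tuple0 s) (tuple0 t) big_ord0.
case/tupleP: s => p s; case/tupleP: t => q t.
by rewrite big_ord_recl /= tnth0 tnth0 IH; under eq_bigr do rewrite !tnthS.
Qed.

Lemma lower n (B : 'M['F_2]_n) l (S : 'I_n -> l.-tuple pauli) :
  (forall i j, B i j = (om (S i) (S j))%:R) -> (\rank B <= l.*2)%N.
Proof.
move=> hB.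
pose X : 'M['F_2]_(n, l + l) := \matrix_(i, j)
  match split j with inl k => xb (tnth (S i) k) | inr k => zb (tnth (S i) k) end.
pose Y : 'M['F_2]_(l + l, n) := \matrix_(j, k)
  match split j with inl j' => zb (tnth (S k) j') | inr j' => xb (tnth (S k) j') end.
have -> : B = X *m Y.
  apply/matrixP => i k; rewrite hB om_sum natr_sum !mxE big_split_ord /=.
  rewrite -big_split /=; apply: eq_bigr => j _.
  by rewrite !mxE split_lshift split_rshift acl_F2.
by rewrite -addnn (leq_trans (mxrankM_maxl _ _)) ?rank_leq_col.
Qed.

Definition alt n (B : 'M['F_2]_n) := (forall i, B i i = 0) /\ (forall i j, B i j = B j i).

Lemma sum_delta n (F : 'I_n -> 'F_2) c : \sum_i F i * (i == c)%:R = F c.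
Proof.
rewrite (bigD1 c) //= big1 => [|i /negbTE ->]; by rewrite ?eqxx ?mulr1 ?addr0 ?mulr0.
Qed.

Lemma F2_dbl (x : 'F_2) : x + x = 0.
Proof. by case: (F2_cases x) => ->; apply/val_inj. Qed.

Definition Aprime n (B : 'M['F_2]_n) a b :=
  B + (\col_i B i b) *m row a B + (\col_i B i a) *m row b B.

Lemma AprimeE n (B : 'M['F_2]_n) a b i j :
  Aprime B a b i j = B i j + B i b * B a j + B i a * B b j.
Proof. by rewrite !mxE !big_ord1 !mxE. Qed.

Lemma step n (B : 'M['F_2]_n) a b : alt B -> B a b = 1 ->
  alt (Aprime B a b) /\ (\rank (Aprime B a b) + 2 <= \rank B)%N.
Proof.
move=> [hd hs] hab.
set A' := Aprime B a b.
have hcol : forall i, A' i a = 0 /\ A' i b = 0.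
  move=> i; rewrite !AprimeE hd hab (hs b a) hab hd !mulr0 !mulr1 addr0.
  by rewrite addr0 !F2_dbl.
split.
  split=> [i|i j]; rewrite !AprimeE.
    by rewrite hd add0r (hs a i) (hs b i) mulrC F2_dbl.
  rewrite (hs j i) (hs j b) (hs a i) (hs j a) (hs b i).
  by rewrite [B b j * _]mulrC [B a j * _]mulrC addrAC.
pose R2 : 'M['F_2]_(2, n) := \matrix_(k, j) if k == 0 then B a j else B b j.
pose Y : 'M['F_2]_(n, 2) := \matrix_(i, k) if k == 0 then (i == b)%:R else (i == a)%:R.
have AY : A' *m Y = 0.
  apply/matrixP => i k; rewrite [LHS]mxE [RHS]mxE.
  case: (ord2_cases k) => -> /=;
    under eq_bigr do rewrite [Y _ _]mxE /=; rewrite sum_delta.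
    by rewrite (proj2 (hcol i)).
  by rewrite (proj1 (hcol i)).
have RY : R2 *m Y = 1%:M.
  apply/matrixP => k k'; rewrite [LHS]mxE [RHS]mxE.
  case: (ord2_cases k) => ->; case: (ord2_cases k') => -> /=;
    under eq_bigr do rewrite [Y _ _]mxE /=; rewrite sum_delta !mxE /= ?hd //; rewrite ?(hs b a) ?hab //; apply/val_inj.
have R2B : (R2 <= B)%MS.
  apply/row_subP => k; case: (ord2_cases k) => ->.
    have -> : row 0 R2 = row a B by apply/rowP => j; rewrite !mxE.
    exact: row_sub.
  have -> : row 1 R2 = row b B by apply/rowP => j; rewrite !mxE.
  exact: row_sub.
have AB : (A' <= B)%MS.
  rewrite /A' /Aprime; apply: addmx_sub; first apply: addmx_sub.
  - exact: submx_refl.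
  - exact: (submx_trans (submxMl _ _) (row_sub _ _)).
  - exact: (submx_trans (submxMl _ _) (row_sub _ _)).
have cap0 : (A' :&: R2)%MS = 0.
  have /submxP [D1 h1] := capmxSl A' R2.
  have /submxP [D2 h2] := capmxSr A' R2.
  have : D2 = 0.
    by rewrite -[D2]mulmx1 -RY mulmxA -h2 h1 -mulmxA AY mulmx0.
  by move=> e; rewrite h2 e mul0mx.
have R2r : (2 <= \rank R2)%N.
  by rewrite -{1}(mxrank1 'F_2 2) -RY mxrankM_maxl.
have sB : (A' + R2 <= B)%MS by rewrite addsmx_sub AB R2B.
have := mxrankS sB; rewrite (mxrank_disjoint_sum cap0) => h.
by apply: leq_trans h; rewrite leq_add2l.
Qed.


Definition letter (x z : 'F_2) : pauli :=
  if x == 1 then (if z == 1 then PY else PX) else (if z == 1 then PZ else PI).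

Lemma xb_letter x z : xb (letter x z) = x.
Proof. by case: (F2_cases x) => ->; case: (F2_cases z) => ->. Qed.
Lemma zb_letter x z : zb (letter x z) = z.
Proof. by case: (F2_cases x) => ->; case: (F2_cases z) => ->. Qed.

Lemma F2id (x u w : 'F_2) : x = (u + w) + (x + u + w).
Proof.
by case: (F2_cases x) => ->; case: (F2_cases u) => ->; case: (F2_cases w) => ->;
  apply/val_inj.
Qed.

Lemma construct n r : forall B : 'M['F_2]_n, (\rank B <= r)%N -> alt B ->
  exists l (S : 'I_n -> l.-tuple pauli),
    (forall i j, B i j = (om (S i) (S j))%:R) /\ (l.*2 <= \rank B)%N.
Proof.
elim: r => [|r IH] B hr hB;
  (case: (boolP [exists a, [exists b, B a b != 0]]) =>
     [/existsP [a /existsP [b hab]] | hn]);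
  try (exists 0%N, (fun _ => [tuple]); split => // i j;
       by move/existsPn: hn => /(_ i) /existsPn /(_ j) /negPn /eqP ->).
  have hab1 : B a b = 1 by case: (F2_cases (B a b)) hab => -> //; rewrite eqxx.
  have [_ hrk] := step hB hab1; lia.
have hab1 : B a b = 1 by case: (F2_cases (B a b)) hab => -> //; rewrite eqxx.
have [hA hrk] := step hB hab1.
have hr' : (\rank (Aprime B a b) <= r)%N by lia.
have [l [S [hS hl]]] := IH _ hr' hA.
exists l.+1, (fun i => cons_tuple (letter (B i b) (B i a)) (S i)); split.
  move=> i j; rewrite /= natrD acl_F2 !xb_letter !zb_letter -hS AprimeE.
  rewrite -(proj2 hB a j) -(proj2 hB b j); exact: F2id.
rewrite doubleS -addn2; lia.
Qed.

Theorem theorem6 (n : nat) (adj : rel 'I_n) :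
  symmetric adj -> irreflexive adj ->
  (forall (l : nat) (S : 'I_n -> l.-tuple pauli),
      realization adj S -> (\rank (adj_mx_F2 adj) <= l.*2)%N)
  /\ exists S : 'I_n -> ((\rank (adj_mx_F2 adj))./2).-tuple pauli,
      realization adj S.
Proof.
move=> hsym hirr.
have low : forall (l : nat) (S : 'I_n -> l.-tuple pauli),
      realization adj S -> (\rank (adj_mx_F2 adj) <= l.*2)%N.
  move=> l S hS; apply: (lower (S := S)) => i j.
  rewrite mxE [in RHS]F2nat; congr (_%:R); symmetry; have := hS i j; by move/psm_rel => ->.
split => //.
have hB : alt (adj_mx_F2 adj).
  split=> [i|i j]; rewrite !mxE ?hirr // hsym //.
have [l [S [hS hl]]] := construct (leqnn _) hB.
have real : realization adj S.
  move=> i j; apply/psm_rel; apply: F2b_inj; by rewrite -(F2nat (om (S i) (S j))) -hS mxE.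
have he : (\rank (adj_mx_F2 adj))./2 = l.
  have h := low _ _ real.
  have e : \rank (adj_mx_F2 adj) = l.*2 by apply/eqP; rewrite eqn_leq h hl.
  by rewrite e doubleK.
by rewrite he; exists S.
Qed.
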